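(* $\mathsf{ELCR}^-$ is decidable: there is an algorithm which, given a formula $\varphi\in\mathcal{L}^-$, decides whether $\varphi$ is satisfiable in some $k$-sight model (equivalently, whether $\varphi$ is valid on all $k$-sight models).
   Context: Fix a natural number $k$ and a vocabulary: $Pred$ (predicate symbols with arities, containing binary $R$), a nonempty finite set $Cons$ of constants, $Var=\{x,y\}$; terms $\mathsf{Term}=Cons\cup Var$. $\mathcal{L}_{\mathsf{B}}$: $\alpha::=P(t_1,\dots,t_m)\mid t_1\equiv t_2\mid\neg\alpha\mid(\alpha\land\alpha)$. $\mathcal{L}^-$: $\varphi::=\alpha\mid K_zt\mid\neg\varphi\mid(\varphi\land\varphi)\mid K_z\alpha$ with $\alpha\in\mathcal{L}_{\mathsf{B}}$, $z\in Var$, $t\in\mathsf{Term}$. Models: $M=(\mathbf{D},\mathbf{I},\Sigma,\sim)$ with $\mathbf{D}$ nonempty finite; $\mathbf{I}(P)\subseteq\mathbf{D}^m$ for $m$-ary $P$, $\mathbf{R}:=\mathbf{I}(R)$ serial; $\mathbf{I}(c)\in\mathbf{D}$ for $c\in Cons$, every element of $\mathbf{D}$ named by some constant; $\Sigma\subseteq\mathbf{D}^{Var}$ nonempty (situations); $\sim_x,\sim_y$ equivalence relations on $\Sigma$. $\mathbb{D}^0(s)=\{s\}$, $\mathbb{D}^{m+1}(s)=\mathbb{D}^m(s)\cup\{t:\exists u\in\mathbb{D}^m(s),(u,t)\in\mathbf{R}\text{ or }(t,u)\in\mathbf{R}\}$. $M$ is $k$-sight if $\sigma\sim_z\sigma'$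 implies $\sigma(z')=\sigma'(z')$ for every $z'\in Var$ with $\sigma(z')\in\mathbb{D}^k(\sigma(z))$. Semantics: $t^{(\mathbf{I},\sigma)}$ is $\mathbf{I}(t)$ or $\sigma(t)$; $P(t_1,\dots,t_m)$ true at $\sigma$ iff the tuple of values is in $\mathbf{I}(P)$; $t_1\equiv t_2$ iff equal values; Boolean standard; $K_zt$ true at $\sigma$ iff $t$ has the same value at all $\sigma'\in\Sigma$ with $\sigma'\sim_z\sigma$; $K_z\varphi$ true at $\sigma$ iff $\varphi$ true at all $\sigma'\in\Sigma$ with $\sigma'\sim_z\sigma$. *)

(* Defs.v *)
From mathcomp Require Import all_boot.
Unset Printing Implicit Defensive.

Inductive rec : Type :=
| RZero : rec
| RSucc : rec
| RProj : nat -> rec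
| RComp : rec -> list rec -> rec
| RPrim : rec -> rec -> rec
| RMin  : rec -> rec.

Inductive reval : rec -> seq nat -> nat -> Prop :=
| ev_zero xs : reval RZero xs 0
| ev_succ xs : reval RSucc xs (head 0 xs).+1
| ev_proj i xs : reval (RProj i) xs (nth 0 xs i)
| ev_comp f gs xs ys y :
    revals gs xs ys -> reval f ys y -> reval (RComp f gs) xs y
| ev_prim0 f g xs y :
    reval f xs y -> reval (RPrim f g) (0 :: xs) y
| ev_primS f g n xs r y :
    reval (RPrim f g) (n :: xs) r -> reval g (n :: r :: xs) y ->
    reval (RPrim f g) (n.+1 :: xs) y
| ev_min f xs n :
    reval f (n :: xs) 0 ->
    (forall m, m < n -> exists2 r, 0 < r & reval f (m :: xs) r) ->
    reval (RMin f) xs n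
with revals : list rec -> seq nat -> seq nat -> Prop :=
| evs_nil xs : revals nil xs [::]
| evs_cons g gs xs y ys :
    reval g xs y -> revals gs xs ys -> revals (g :: gs) xs (y :: ys).

Definition rec_decidable (P : nat -> Prop) : Prop :=
  exists f : rec, forall n,
    (P n -> reval f [:: n] 1) /\ (~ P n -> reval f [:: n] 0).

Definition npair (a b : nat) : nat := ((a + b) * (a + b).+1) %/ 2 + b.

Inductive var : Type := vx | vy.

Section Syntax.
Variable nc : nat.
Variable ar : nat -> nat.

Inductive term : Type :=
| TC : 'I_nc -> term
| TV : var -> term.

Inductive bform : Type :=
| BAtom (P : nat) : (ar P).-tuple term -> bform
| BEq : term -> term -> bform
| BNot : bform -> bform
| BAnd : bform -> bform -> bform.

Inductive form : Type :=
| FB : bform -> form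
| FKt : var -> term -> form
| FNot : form -> form
| FAnd : form -> form -> form
| FKa : var -> bform -> form.

Definition enc_var (z : var) : nat := if z is vx then 0 else 1.
Definition enc_term (t : term) : nat :=
  match t with TC c => npair 0 (nat_of_ord c) | TV z => npair 1 (enc_var z) end.
Fixpoint enc_terms (s : seq term) : nat :=
  if s is t :: s' then (npair (enc_term t) (enc_terms s')).+1 else 0.
Fixpoint enc_bform (a : bform) : nat :=
  match a with
  | BAtom P ts => npair 0 (npair P (enc_terms (tval ts)))
  | BEq t1 t2 => npair 1 (npair (enc_term t1) (enc_term t2))
  | BNot a1 => npair 2 (enc_bform a1)
  | BAnd a1 a2 => npair 3 (npair (enc_bform a1) (enc_bform a2))
  end.
Fixpoint enc_form (f : form) : nat :=
  match f with
  | FB a => npair 0 (enc_bform a)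
  | FKt z t => npair 1 (npair (enc_var z) (enc_term t))
  | FNot f1 => npair 2 (enc_form f1)
  | FAnd f1 f2 => npair 3 (npair (enc_form f1) (enc_form f2))
  | FKa z a => npair 4 (npair (enc_var z) (enc_bform a))
  end.

Record model : Type := Model {
  mdom : finType;
  minterp : nat -> seq mdom -> bool;
  mcons : 'I_nc -> mdom;
  msits : (var -> mdom) -> Prop;
  msim : var -> (var -> mdom) -> (var -> mdom) -> Prop
}.
Arguments minterp : clear implicits.
Arguments mcons : clear implicits.
Arguments msits : clear implicits.
Arguments msim : clear implicits.

Variable r : nat. (* index of R *)

Definition relR (M : model) (a b : mdom M) : Prop := minterp M r [:: a; b].

Definition is_model (M : model) : Prop :=
  [/\ (forall P (s : seq (mdom M)), minterp M P s -> size s = ar P),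
      (forall a : mdom M, exists b, relR M a b),
      (forall d : mdom M, exists c, mcons M c = d),
      (exists s, msits M s) &
      (forall z s, msits M s -> msim M z s s) /\
      (forall z s1 s2 s3, msits M s1 -> msits M s2 -> msits M s3 ->
         (msim M z s1 s2 -> msim M z s2 s1) /\
         (msim M z s1 s2 -> msim M z s2 s3 -> msim M z s1 s3))].

Fixpoint nbhd (M : model) (m : nat) (s t : mdom M) : Prop :=
  match m with
  | 0 => t = s
  | m'.+1 => nbhd M m' s t \/
             exists u, nbhd M m' s u /\ (relR M u t \/ relR M t u)
  end.

Definition k_sight (k : nat) (M : model) : Prop :=
  forall z s s', msits M s -> msits M s' -> msim M z s s' ->
    forall z', nbhd M k (s z) (s z') -> s z' = s' z'.

Definition teval (M : model) (s : var -> mdom M) (t : term) : mdom M :=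
  match t with TC c => mcons M c | TV z => s z end.

Fixpoint bsat (M : model) (s : var -> mdom M) (a : bform) : Prop :=
  match a with
  | BAtom P ts => minterp M P (map (teval M s) (tval ts))
  | BEq t1 t2 => teval M s t1 = teval M s t2
  | BNot a1 => ~ bsat M s a1
  | BAnd a1 a2 => bsat M s a1 /\ bsat M s a2
  end.

Fixpoint fsat (M : model) (s : var -> mdom M) (f : form) : Prop :=
  match f with
  | FB a => bsat M s a
  | FKt z t => forall s', msits M s' -> msim M z s s' -> teval M s' t = teval M s t
  | FNot f1 => ~ fsat M s f1
  | FAnd f1 f2 => fsat M s f1 /\ fsat M s f2
  | FKa z a => forall s', msits M s' -> msim M z s s' -> bsat M s' a
  end.

Definition satisfiable (k : nat) (f : form) : Prop :=
  exists (M : model) (s : var -> mdom M),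
    [/\ is_model M, k_sight k M, msits M s & fsat M s f].

End Syntax.

(* Main.v *)
Require Import Defs.
From mathcomp Require Import all_boot.
From Stdlib Require Import ClassicalEpsilon FunctionalExtensionality.
Set Implicit Arguments. Unset Strict Implicit. Unset Printing Implicit Defensive.

Fixpoint peval (f : rec) (xs : seq nat) {struct f} : nat :=
  match f with
  | RZero => 0
  | RSucc => (head 0 xs).+1
  | RProj i => nth 0 xs i
  | RComp f gs => peval f (map (fun g => peval g xs) gs)
  | RPrim f g =>
      match xs with
      | [::] => 0
      | n :: ys =>
        (fix it k := match k with 0 => peval f ys | k'.+1 => peval g (k' :: it k' :: ys) end) n
      end
  | RMin _ => 0
  end.

Fixpoint sf (e : bool) (f : rec) : bool :=
  match f with
  | RZero | RSucc | RProj _ => true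
  | RComp f gs => ((fix okl gs := if gs is g :: gs' then sf e g && okl gs' else true) gs)
                   && sf (nilp gs) f
  | RPrim f g => [&& ~~ e, sf true f & sf false g]
  | RMin _ => false
  end.

Lemma peval_prim0 f g ys : peval (RPrim f g) (0 :: ys) = peval f ys.
Proof. by []. Qed.
Lemma peval_primS f g n ys : peval (RPrim f g) (n.+1 :: ys) = peval g (n :: peval (RPrim f g) (n :: ys) :: ys).
Proof. by []. Qed.

Lemma sf_sound : forall f e, sf e f -> forall xs, (~~ e -> 0 < size xs) -> reval f xs (peval f xs).
Proof.
fix IH 1 => f; case: f => [||i|f gs|f g|f] e //=.
- move=> _ xs _; exact: ev_zero.
- move=> _ xs _; exact: ev_succ.
- move=> _ xs _; exact: ev_proj.
- move=> /andP[okgs okf] xs hxs.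
  apply: (@ev_comp _ _ _ (map (fun g => peval g xs) gs)).
  + elim: gs okgs {okf} => [|g gs IHg] /=; first by move=> _; exact: evs_nil.
    move=> /andP[okg okgs]; apply: evs_cons; last exact: IHg.
    exact: (IH g e).
  + apply: (IH f (nilp gs)) => //. by rewrite size_map; case: (gs).
- move=> /and3P[ne okf okg] [|n ys]; first by move=> /(_ ne).
  move=> _; elim: n => [|n IHn] /=.
  + apply: ev_prim0; exact: (IH f true).
  + apply: ev_primS; first exact: IHn. exact: (IH g false).
Qed.

Lemma peval_comp f gs xs : peval (RComp f gs) xs = peval f (map (fun g => peval g xs) gs).
Proof. by []. Qed.
Lemma peval_proj i xs : peval (RProj i) xs = nth 0 xs i.
Proof. by []. Qed.
Lemma peval_succ xs : peval RSucc xs = (head 0 xs).+1.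
Proof. by []. Qed.
Lemma peval_zero xs : peval RZero xs = 0.
Proof. by []. Qed.
Arguments peval : simpl never.
Definition pE := (peval_comp, peval_proj, peval_succ, peval_zero, peval_prim0).
Ltac pev1 := match goal with
 | |- context [peval (RComp ?f ?gs) ?xs] => rewrite (peval_comp f gs xs)
 | |- context [peval (RProj ?i) ?xs] => rewrite (peval_proj i xs)
 | |- context [peval RSucc ?xs] => rewrite (peval_succ xs)
 | |- context [peval RZero ?xs] => rewrite (peval_zero xs)
 | |- context [peval (RPrim ?f ?g) (0 :: ?ys)] => rewrite (peval_prim0 f g ys)
 | |- context [peval (RPrim ?f ?g) (?n.+1 :: ?ys)] => rewrite (peval_primS f g n ys)
 end.
Ltac pev := repeat (pev1; simpl).

Notation C := RComp.
Notation P := RProj.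
Fixpoint cst k := if k is k'.+1 then C RSucc [:: cst k'] else RZero.
Lemma cstE k xs : peval (cst k) xs = k.
Proof. by elim: k => [|k IH] /=; pev; rewrite //= IH. Qed.
Lemma sf_cst e k : sf e (cst k).
Proof. by elim: k e => //= k IH e; rewrite IH. Qed.

Definition addR := RPrim (P 0) (C RSucc [:: P 1]).
Lemma addE a b : peval addR [:: a; b] = a + b.
Proof. rewrite /addR; elim: a => [|a IH]; first by pev. by pev; rewrite IH. Qed.
Definition mulR := RPrim RZero (C addR [:: P 1; P 2]).
Lemma mulE a b : peval mulR [:: a; b] = a * b.
Proof. rewrite /mulR; elim: a => [|a IH]; first by pev. by pev; rewrite IH addE mulSn addnC. Qed.
Definition predR := RPrim RZero (P 0).
Lemma predE a : peval predR [:: a] = a.-1.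
Proof. by rewrite /predR; case: a => [|a]; pev. Qed.
Definition subR := C (RPrim (P 0) (C predR [:: P 1])) [:: P 1; P 0].
Lemma subE a b : peval subR [:: a; b] = a - b.
Proof.
rewrite /subR; pev; elim: b => [|b IH]; first by pev; rewrite subn0.
by pev; rewrite IH predE subnS.
Qed.
Definition iszR := RPrim (cst 1) RZero.
Lemma iszE a : peval iszR [:: a] = (a == 0).
Proof. by rewrite /iszR; case: a => [|a]; pev; rewrite ?cstE. Qed.
Definition sgR := C subR [:: cst 1; C iszR [:: P 0]].
Lemma sgE a : peval sgR [:: a] = (0 < a).
Proof. by rewrite /sgR; pev; rewrite iszE ?cstE subE; case: a. Qed.
Definition leR := C iszR [:: C subR [:: P 0; P 1]].
Lemma leE a b : peval leR [:: a; b] = (a <= b).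
Proof. by rewrite /leR; pev; rewrite subE iszE subn_eq0. Qed.
Definition eqR := C mulR [:: C leR [:: P 0; P 1]; C leR [:: P 1; P 0]].
Lemma eqRE a b : peval eqR [:: a; b] = (a == b).
Proof. by rewrite /eqR; pev; rewrite !leE mulE eqn_leq; case: (a <= b); case: (b <= a). Qed.
Definition iteR := C addR [:: C mulR [:: C sgR [:: P 0]; P 1]; C mulR [:: C iszR [:: P 0]; P 2]].
Lemma iteE c x y : peval iteR [:: c; x; y] = if 0 < c then x else y.
Proof. by rewrite /iteR; pev; rewrite sgE iszE !mulE addE; case: c => [|c]; rewrite /= ?mul0n ?mul1n ?add0n ?addn0. Qed.

Definition sumR body := RPrim RZero (C addR [:: P 1; body]).
Lemma sumE body F N xs : (forall i a, peval body (i :: a :: xs) = F i) ->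
  peval (sumR body) (N :: xs) = \sum_(i < N) F i.
Proof.
rewrite /sumR => hb; elim: N => [|N IH]; first by rewrite big_ord0 !pE.
by pev; rewrite IH hb addE big_ord_recr.
Qed.
Lemma sf_sumR e body : sf false body -> sf e (sumR body) = ~~ e.
Proof. by move=> h; rewrite /= h; case: e. Qed.

Definition pow2R := RPrim (cst 1) (C addR [:: P 1; P 1]).
Lemma pow2E n : peval pow2R [:: n] = 2 ^ n.
Proof. rewrite /pow2R; elim: n => [|n IH]; first by pev; rewrite ?cstE. by pev; rewrite IH addE expnS mul2n addnn. Qed.

Definition iterR step := RPrim (P 0) (C step [:: P 1]).
Lemma iterE step (F : nat -> nat) : (forall x, peval step [:: x] = F x) ->
  forall N x, peval (iterR step) [:: N; x] = iter N F x.
Proof. rewrite /iterR => h; elim=> [|N IH] x; first by pev. by pev; rewrite IH h. Qed.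

Definition tri s := \sum_(i < s.+1) i.
Definition triR := C (sumR (P 0)) [:: C RSucc [:: P 0]].
Lemma triE s : peval triR [:: s] = tri s.
Proof. by rewrite /triR; pev; rewrite (@sumE _ id) // => i a; pev. Qed.
Definition npairR := C addR [:: C triR [:: C addR [:: P 0; P 1]]; P 1].
Lemma tri_bin s : tri s = 'C(s.+1, 2).
Proof. by rewrite /tri -bin2_sum big_mkord. Qed.
Lemma npair_tri a b : npair a b = tri (a + b) + b.
Proof. by rewrite /npair tri_bin bin2 /= -divn2 mulnC. Qed.
Lemma npairE a b : peval npairR [:: a; b] = npair a b.
Proof. by rewrite /npairR; pev; rewrite addE triE addE npair_tri. Qed.

Definition sfun n := \sum_(i < n) (tri i.+1 <= n).
Definition sR := C (sumR (C leR [:: C triR [:: C RSucc [:: P 0]]; P 2])) [:: P 0; P 0].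
Lemma sE n : peval sR [:: n] = sfun n.
Proof. rewrite /sR; pev; rewrite (@sumE _ (fun i => (tri i.+1 <= n):nat)) // => i a. by pev; rewrite triE leE. Qed.
Definition sndR := C subR [:: P 0; C triR [:: C sR [:: P 0]]].
Definition fstR := C subR [:: C sR [:: P 0]; C sndR [:: P 0]].
Definition usnd n := n - tri (sfun n).
Definition ufst n := sfun n - usnd n.
Lemma sndE n : peval sndR [:: n] = usnd n.
Proof. by rewrite /sndR; pev; rewrite sE triE subE. Qed.
Lemma fstE n : peval fstR [:: n] = ufst n.
Proof. by rewrite /fstR; pev; rewrite sE sndE !subE. Qed.

Lemma triS s : tri s.+1 = tri s + s.+1.
Proof. by rewrite /tri big_ord_recr. Qed.
Lemma tri_mono : {homo tri : a b / a <= b}.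
Proof. apply: homo_leq => [a|b a c|n]; [exact: leqnn|exact: leq_trans | by rewrite triS leq_addr]. Qed.
Lemma tri_ge s : s <= tri s.
Proof. elim: s => // s IH; by rewrite triS addnS ltnS leq_addl. Qed.

Lemma sfun_npair a b : sfun (npair a b) = a + b.
Proof.
rewrite /sfun npair_tri.
set n := tri (a + b) + b.
have h i : (tri i.+1 <= n) = (i < a + b).
  case: (ltnP i (a + b)) => hi.
  - apply: leq_trans (leq_addr _ _); exact: tri_mono.
  - apply/negbTE; rewrite -ltnNge /n.
    apply: (@leq_trans (tri (a+b).+1)); last exact: tri_mono.
    by rewrite triS ltn_add2l ltnS leq_addl.
rewrite (eq_bigr (fun i : 'I_n => (i < a + b) : nat)); last by move=> i _; rewrite h.
rewrite -(big_mkord xpredT (fun i => (i < a + b) : nat)).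
have hab : a + b <= n by rewrite /n; apply: leq_trans (tri_ge _) (leq_addr _ _).
rewrite (big_cat_nat (leq0n (a+b)) hab) /=.
rewrite big_nat_cond (eq_bigr (fun _ => 1)); last by move=> i /andP[/andP[_ ->]].
rewrite -big_nat_cond sum_nat_const_nat subn0 muln1.
rewrite big_nat_cond big1 ?addn0 // => i /andP[/andP[hi _] _].
by rewrite ltnNge hi.
Qed.
Lemma usnd_npair a b : usnd (npair a b) = b.
Proof. by rewrite /usnd sfun_npair npair_tri addKn. Qed.
Lemma ufst_npair a b : ufst (npair a b) = a.
Proof. by rewrite /ufst usnd_npair sfun_npair addnK. Qed.
Lemma npair_inj a b c d : npair a b = npair c d -> a = c /\ b = d.
Proof. move=> h; split; [rewrite -(ufst_npair a b) h ufst_npair // | rewrite -(usnd_npair a b) h usnd_npair //]. Qed.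
Lemma npair_geL a b : a <= npair a b.
Proof. rewrite npair_tri; apply: (leq_trans (leq_addr b a)); apply: leq_trans (tri_ge _) (leq_addr _ _). Qed.
Lemma npair_geR a b : b <= npair a b.
Proof. by rewrite npair_tri leq_addl. Qed.
Lemma npair_monoL a a' b : a <= a' -> npair a b <= npair a' b.
Proof. by move=> h; rewrite !npair_tri leq_add2r tri_mono // leq_add2r. Qed.
Lemma npair_monoR a b b' : b <= b' -> npair a b <= npair a b'.
Proof. by move=> h; rewrite !npair_tri leq_add // tri_mono // leq_add2l. Qed.
Lemma npair_gtR a b : 0 < a -> b < npair a b.
Proof.
move=> ha; rewrite npair_tri -{1}(add0n b) ltn_add2r.
by apply: leq_trans (tri_ge _); rewrite addn_gt0 ha.
Qed.
Lemma npair_gtR0 b : 0 < b -> b < npair 0 b.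
Proof. move=> hb; rewrite npair_tri -{1}(add0n b) ltn_add2r; exact: leq_trans hb (tri_ge _). Qed.

Definition halfR := RPrim RZero (C addR [:: P 1; C subR [:: P 0; C addR [:: P 1; P 1]]]).
Lemma halfE x : peval halfR [:: x] = x./2.
Proof.
rewrite /halfR; elim: x => [|x IH]; first by pev.
pev; rewrite IH addE addE subE addnn.
by rewrite -{2}(odd_double_half x) addnK uphalf_half addnC.
Qed.
Definition oddR := C subR [:: P 0; C addR [:: C halfR [:: P 0]; C halfR [:: P 0]]].
Lemma oddE x : peval oddR [:: x] = odd x.
Proof. by rewrite /oddR; pev; rewrite halfE addE subE addnn -{1}(odd_double_half x) addnK. Qed.
Definition bitn x i := odd (x %/ 2 ^ i).
Definition bitR := C oddR [:: C (iterR halfR) [:: P 1; P 0]].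
Lemma iter_half i x : iter i half x = x %/ 2 ^ i.
Proof. elim: i => [|i IH] /=; first by rewrite divn1. by rewrite IH -divn2 -divnMA expnS mulnC. Qed.
Lemma bitE x i : peval bitR [:: x; i] = bitn x i.
Proof. by rewrite /bitR; pev; rewrite (iterE halfE) oddE iter_half. Qed.

Lemma bitn_add H c A p : H < 2 ^ A ->
  bitn (H + c * 2 ^ A) p = if p < A then bitn H p else bitn c (p - A).
Proof.
move=> hH; rewrite /bitn; case: ltnP => hp.
- have -> : 2 ^ A = 2 ^ (A - p) * 2 ^ p by rewrite -expnD subnK // ltnW.
  rewrite mulnA divnDMl ?expn_gt0 // oddD oddM oddX.
  by rewrite subn_eq0 leqNgt hp /= andbF addbF.
- rewrite -{1}(subnKC hp) expnD divnMA.
  by rewrite addnC divnMDl ?expn_gt0 // (divn_small hH) addn0.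
Qed.

Lemma bitn_lt1 (v : bool) k : bitn v k = (k == 0) && v.
Proof.
rewrite /bitn; case: k => [|k]; first by rewrite expn0 divn1; case: v.
have h : 1 < 2 ^ k.+1 by rewrite -{1}(expn0 2) ltn_exp2l.
by rewrite divn_small //; case: v => //; apply: ltnW.
Qed.

Definition bsumv (v : nat -> bool) W := \sum_(j < W) v j * 2 ^ j.
Lemma bsumv_lt v W : bsumv v W < 2 ^ W.
Proof.
rewrite /bsumv; elim: W => [|W IH]; first by rewrite big_ord0.
rewrite big_ord_recr /= expnS mul2n -addnn.
apply: leq_trans (_ : _ < 2 ^ W + 2 ^ W) _ => //.
rewrite -addSn leq_add //; by case: (v W); rewrite ?mul1n ?mul0n ?expn_gt0.
Qed.
Lemma bitn_bsumv v W i : bitn (bsumv v W) i = (i < W) && v i.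
Proof.
elim: W i => [|W IH] i; first by rewrite /bsumv big_ord0 /bitn div0n.
rewrite /bsumv big_ord_recr /= -/(bsumv v W) bitn_add ?bsumv_lt // IH.
case: (ltnP i W) => hi; first by rewrite ltnS ltnW.
rewrite bitn_lt1 subn_eq0 ltnS.
case: (eqVneq i W) => [->|ne]; first by rewrite leqnn.
have -> : (i <= W) = false by apply/negbTE; rewrite -ltnNge ltn_neqAle eq_sym ne. done.
Qed.
Lemma bitn_bool_ex (beta : nat -> bool) G : exists2 b, b < 2 ^ G & forall g, g < G -> bitn b g = beta g.
Proof. exists (bsumv beta G); first exact: bsumv_lt. by move=> g hg; rewrite bitn_bsumv hg. Qed.

Fixpoint tabA k (l : seq nat) : rec :=
  if l is a :: l' then C iteR [:: C eqR [:: P 0; cst k]; cst a; C (tabA k.+1 l') [:: P 0]] else RZero.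
Lemma tabAE l k x : peval (tabA k l) [:: x] = if k <= x then nth 0 l (x - k) else 0.
Proof.
elim: l k => [|a l IH] k /=; first by pev; case: ifP => //; rewrite nth_nil.
pev; rewrite !cstE eqRE IH iteE.
case: (eqVneq x k) => [->|ne] /=; first by rewrite leqnn subnn.
case: (ltnP k x) => h; first by rewrite (ltnW h) -(subnSK h).
by rewrite leq_eqVlt eq_sym (negbTE ne) ltnNge h.
Qed.
Definition tab l := tabA 0 l.
Lemma tabE l x : peval (tab l) [:: x] = nth 0 l x.
Proof. by rewrite /tab tabAE subn0. Qed.

Fixpoint orL (ps : seq rec) : rec := if ps is p :: ps' then C addR [:: p; orL ps'] else RZero.
Lemma orLE ps xs : 0 < size xs -> peval (orL ps) xs = sumn [seq peval p xs | p <- ps].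
Proof. Abort.
Lemma orLE ps xs : peval (orL ps) xs = sumn [seq peval p xs | p <- ps].
Proof. by elim: ps => [|p ps IH] /=; pev; rewrite ?addE ?IH. Qed.
Lemma lt0b' (b : bool) : (0 < (b : nat)) = b.
Proof. by case: b. Qed.
Ltac simplR := repeat progress rewrite ?cstE ?sndE ?fstE ?predE ?mulE ?addE ?subE ?iszE ?sgE ?leE ?eqRE ?iteE ?bitE ?pow2E ?npairE ?tabE ?triE ?halfE ?oddE ?lt0b'.

Record TD := mkTD { cnl : seq nat; canl : seq nat; Rl : seq nat; Sgl : seq nat;
  Xl : seq nat; Yl : seq nat; j0 : nat }.

Definition divl nc := [seq j %/ nc | j <- iota 0 (nc * nc)].
Definition modl nc := [seq j %% nc | j <- iota 0 (nc * nc)].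

(* term value at situation j, term code e *)
Definition tvalS nc (td : TD) j e :=
  if ufst e == 0 then nth 0 (cnl td) (usnd e)
  else if usnd e == 0 then nth 0 (canl td) (nth 0 (divl nc) j)
  else nth 0 (canl td) (nth 0 (modl nc) j).
Definition tvalR nc td := C iteR [:: C iszR [:: C fstR [:: P 1]]; C (tab (cnl td)) [:: C sndR [:: P 1]];
   C iteR [:: C iszR [:: C sndR [:: P 1]]; C (tab (canl td)) [:: C (tab (divl nc)) [:: P 0]];
              C (tab (canl td)) [:: C (tab (modl nc)) [:: P 0]]]].
Lemma tvalE nc td j e : peval (tvalR nc td) [:: j; e] = tvalS nc td j e.
Proof.
rewrite /tvalR; pev; rewrite !fstE !sndE !iszE !tabE !iteE !lt0b' /tvalS.
by case: (ufst e == 0); case: (usnd e == 0).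
Qed.

Definition fstepS nc td j st :=
  let L := ufst st in
  if L == 0 then st else (npair (usnd L.-1) (npair (usnd st) (tvalS nc td j (ufst L.-1))).+1).
Definition fstepR nc td :=
  C iteR [:: C iszR [:: C fstR [:: P 0]]; P 0;
    C npairR [:: C sndR [:: C predR [:: C fstR [:: P 0]]];
                 C RSucc [:: C npairR [:: C sndR [:: P 0];
                    C (tvalR nc td) [:: P 1; C fstR [:: C predR [:: C fstR [:: P 0]]]]]]]].
Lemma fstepE nc td st j : peval (fstepR nc td) [:: st; j] = fstepS nc td j st.
Proof.
rewrite /fstepR; pev; rewrite !fstE !predE !sndE ?fstE tvalE !npairE iszE iteE lt0b' /fstepS.
by case: (ufst st == 0).
Qed.
Definition foldS nc td j L := usnd (iter L (fstepS nc td j) (npair L 0)).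
Definition foldR nc td :=
  C sndR [:: C (RPrim (P 0) (C (fstepR nc td) [:: P 1; P 3])) [:: P 1; C npairR [:: P 1; cst 0]; P 0]].
Lemma foldE nc td j L : peval (foldR nc td) [:: j; L] = foldS nc td j L.
Proof.
rewrite /foldR; pev; rewrite ?cstE npairE /foldS sndE; congr usnd.
move: (npair L 0) => x; elim: L => [|N IH]; pev => //.
by rewrite IH fstepE.
Qed.

Definition atomS nc r td b j q : nat :=
  if ufst q == r then nth 0 (Rl td) (tvalS nc td j (ufst (usnd q).-1) * nc
                                     + tvalS nc td j (ufst (usnd (usnd q).-1).-1))
  else bitn b (npair (ufst q) (foldS nc td j (usnd q))).
Definition atomR nc r td :=
  C iteR [:: C eqR [:: C fstR [:: P 2]; cst r];
    C (tab (Rl td)) [:: C addR [:: C mulR [:: C (tvalR nc td) [:: P 1; C fstR [:: C predR [:: C sndR [:: P 2]]]]; cst nc];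
                                 C (tvalR nc td) [:: P 1; C fstR [:: C predR [:: C sndR [:: C predR [:: C sndR [:: P 2]]]]]]]];
    C bitR [:: P 0; C npairR [:: C fstR [:: P 2]; C (foldR nc td) [:: P 1; C sndR [:: P 2]]]]].
Lemma atomE nc r td b j q : peval (atomR nc r td) [:: b; j; q] = atomS nc r td b j q.
Proof.
rewrite /atomR; pev; rewrite !cstE !sndE !predE ?sndE ?predE !fstE !tvalE mulE addE tabE.
by rewrite foldE npairE bitE eqRE iteE lt0b'.
Qed.

Definition bBS nc r td b H m j : nat :=
  let t := ufst m in let q := usnd m in
  if t == 0 then atomS nc r td b j q
  else if t == 1 then (tvalS nc td j (ufst q) == tvalS nc td j (usnd q)) : nat
  else if t == 2 then ~~ bitn H (nc * nc * q + j) : nat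
  else if t == 3 then (bitn H (nc * nc * ufst q + j) && bitn H (nc * nc * usnd q + j)) : nat
  else 0.
Definition bBR nc r td :=
  let t := C fstR [:: P 2] in let q := C sndR [:: P 2] in
  C iteR [:: C eqR [:: t; cst 0]; C (atomR nc r td) [:: P 0; P 3; q];
  C iteR [:: C eqR [:: t; cst 1]; C eqR [:: C (tvalR nc td) [:: P 3; C fstR [:: q]]; C (tvalR nc td) [:: P 3; C sndR [:: q]]];
  C iteR [:: C eqR [:: t; cst 2]; C iszR [:: C bitR [:: P 1; C addR [:: C mulR [:: cst (nc * nc); q]; P 3]]];
  C iteR [:: C eqR [:: t; cst 3];
     C mulR [:: C bitR [:: P 1; C addR [:: C mulR [:: cst (nc * nc); C fstR [:: q]]; P 3]];
                C bitR [:: P 1; C addR [:: C mulR [:: cst (nc * nc); C sndR [:: q]]; P 3]]];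
     cst 0]]]].
Lemma bBE nc r td b H m j : peval (bBR nc r td) [:: b; H; m; j] = bBS nc r td b H m j.
Proof.
rewrite /bBR; pev; rewrite !atomE !tvalE; simplR; rewrite /bBS.
by rewrite eqb0 mulnb.
Qed.

Definition entryBS nc r td b H m := \sum_(j < nc * nc) bBS nc r td b H m j * 2 ^ j.
Definition entryBR nc r td :=
  C (sumR (C mulR [:: C (bBR nc r td) [:: P 2; P 3; P 4; P 0]; C pow2R [:: P 0]])) [:: cst (nc * nc); P 0; P 1; P 2].
Lemma entryBE nc r td b H m : peval (entryBR nc r td) [:: b; H; m] = entryBS nc r td b H m.
Proof.
rewrite /entryBR; pev; rewrite cstE (@sumE _ (fun j => bBS nc r td b H m j * 2 ^ j)) // => i a.
by pev; rewrite bBE pow2E mulE.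
Qed.

Fixpoint BHS nc r td b N := if N is i.+1 then
   let H := BHS nc r td b i in H + entryBS nc r td b H i * 2 ^ (nc * nc * i) else 0.
Definition BHR nc r td :=
  RPrim (cst 0) (C addR [:: P 1; C mulR [:: C (entryBR nc r td) [:: P 2; P 1; P 0]; C pow2R [:: C mulR [:: cst (nc * nc); P 0]]]]).
Lemma BHE nc r td N b : peval (BHR nc r td) [:: N; b] = BHS nc r td b N.
Proof.
rewrite /BHR; elim: N => [|N IH]; pev; first by rewrite ?cstE.
by rewrite IH entryBE; simplR.
Qed.

Definition ZS nc td z j j' : nat :=
  if z == 0 then nth 0 (Xl td) (j * (nc * nc) + j') else nth 0 (Yl td) (j * (nc * nc) + j').
Definition ZR nc td :=
  C iteR [:: C iszR [:: P 0]; C (tab (Xl td)) [:: C addR [:: C mulR [:: P 1; cst (nc * nc)]; P 2]];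
                             C (tab (Yl td)) [:: C addR [:: C mulR [:: P 1; cst (nc * nc)]; P 2]]].
Lemma ZE nc td z j j' : peval (ZR nc td) [:: z; j; j'] = ZS nc td z j j'.
Proof. by rewrite /ZR; pev; simplR; rewrite /ZS; case: (z == 0). Qed.

Definition KtS nc td j t z : bool :=
  (\sum_(j' < nc * nc) (nth 0 (Sgl td) j' * ZS nc td z j j' * ~~ (tvalS nc td j' t == tvalS nc td j t))) == 0.
Definition KtR nc td :=
  C iszR [:: C (sumR (C mulR [:: C mulR [:: C (tab (Sgl td)) [:: P 0]; C (ZR nc td) [:: P 4; P 2; P 0]];
                       C iszR [:: C eqR [:: C (tvalR nc td) [:: P 0; P 3]; C (tvalR nc td) [:: P 2; P 3]]]]))
               [:: cst (nc * nc); P 0; P 1; P 2]].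
Lemma KtE nc td j t z : peval (KtR nc td) [:: j; t; z] = KtS nc td j t z.
Proof.
rewrite /KtR; pev; rewrite cstE (@sumE _ (fun j' => nth 0 (Sgl td) j' * ZS nc td z j j' * ~~ (tvalS nc td j' t == tvalS nc td j t))).
  by rewrite iszE.
by move=> i a; pev; rewrite !tvalE ZE; simplR; rewrite eqb0.
Qed.

Definition KaS nc td BHf j a z : bool :=
  (\sum_(j' < nc * nc) (nth 0 (Sgl td) j' * ZS nc td z j j' * ~~ bitn BHf (nc * nc * a + j'))) == 0.
Definition KaR nc td :=
  C iszR [:: C (sumR (C mulR [:: C mulR [:: C (tab (Sgl td)) [:: P 0]; C (ZR nc td) [:: P 5; P 3; P 0]];
                       C iszR [:: C bitR [:: P 2; C addR [:: C mulR [:: cst (nc * nc); P 4]; P 0]]]]))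
               [:: cst (nc * nc); P 0; P 1; P 2; P 3]].
Lemma KaE nc td BHf j a z : peval (KaR nc td) [:: BHf; j; a; z] = KaS nc td BHf j a z.
Proof.
rewrite /KaR; pev; rewrite cstE (@sumE _ (fun j' => nth 0 (Sgl td) j' * ZS nc td z j j' * ~~ bitn BHf (nc * nc * a + j'))).
  by rewrite iszE.
by move=> i a'; pev; rewrite ZE; simplR; rewrite eqb0.
Qed.

Definition bFS nc td BHf H m j : nat :=
  let t := ufst m in let q := usnd m in
  if t == 0 then bitn BHf (nc * nc * q + j) : nat
  else if t == 1 then KtS nc td j (usnd q) (ufst q) : nat
  else if t == 2 then ~~ bitn H (nc * nc * q + j) : nat
  else if t == 3 then (bitn H (nc * nc * ufst q + j) && bitn H (nc * nc * usnd q + j)) : nat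
  else if t == 4 then KaS nc td BHf j (usnd q) (ufst q) : nat
  else 0.
Definition bFR nc td :=
  let t := C fstR [:: P 2] in let q := C sndR [:: P 2] in
  C iteR [:: C eqR [:: t; cst 0]; C bitR [:: P 0; C addR [:: C mulR [:: cst (nc * nc); q]; P 3]];
  C iteR [:: C eqR [:: t; cst 1]; C (KtR nc td) [:: P 3; C sndR [:: q]; C fstR [:: q]];
  C iteR [:: C eqR [:: t; cst 2]; C iszR [:: C bitR [:: P 1; C addR [:: C mulR [:: cst (nc * nc); q]; P 3]]];
  C iteR [:: C eqR [:: t; cst 3];
     C mulR [:: C bitR [:: P 1; C addR [:: C mulR [:: cst (nc * nc); C fstR [:: q]]; P 3]];
                C bitR [:: P 1; C addR [:: C mulR [:: cst (nc * nc); C sndR [:: q]]; P 3]]];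
  C iteR [:: C eqR [:: t; cst 4]; C (KaR nc td) [:: P 0; P 3; C sndR [:: q]; C fstR [:: q]];
     cst 0]]]]].
Lemma bFE nc td BHf H m j : peval (bFR nc td) [:: BHf; H; m; j] = bFS nc td BHf H m j.
Proof. by rewrite /bFR; pev; rewrite !KtE !KaE; simplR; rewrite /bFS eqb0 mulnb. Qed.

Definition entryFS nc td BHf H m := \sum_(j < nc * nc) bFS nc td BHf H m j * 2 ^ j.
Definition entryFR nc td :=
  C (sumR (C mulR [:: C (bFR nc td) [:: P 2; P 3; P 4; P 0]; C pow2R [:: P 0]])) [:: cst (nc * nc); P 0; P 1; P 2].
Lemma entryFE nc td BHf H m : peval (entryFR nc td) [:: BHf; H; m] = entryFS nc td BHf H m.
Proof.
rewrite /entryFR; pev; rewrite cstE (@sumE _ (fun j => bFS nc td BHf H m j * 2 ^ j)) // => i a.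
by pev; rewrite bFE pow2E mulE.
Qed.

Fixpoint FHS nc td BHf N := if N is i.+1 then
   let H := FHS nc td BHf i in H + entryFS nc td BHf H i * 2 ^ (nc * nc * i) else 0.
Definition FHR nc td :=
  RPrim (cst 0) (C addR [:: P 1; C mulR [:: C (entryFR nc td) [:: P 2; P 1; P 0]; C pow2R [:: C mulR [:: cst (nc * nc); P 0]]]]).
Lemma FHE nc td N BHf : peval (FHR nc td) [:: N; BHf] = FHS nc td BHf N.
Proof.
rewrite /FHR; elim: N => [|N IH]; pev; first by rewrite ?cstE.
by rewrite IH entryFE; simplR.
Qed.

Definition evalS nc r td n b := bitn (FHS nc td (BHS nc r td b n.+1) n.+1) (nc * nc * n + j0 td).
Definition evalR nc r td :=
  C bitR [:: C (FHR nc td) [:: C RSucc [:: P 0]; C (BHR nc r td) [:: C RSucc [:: P 0]; P 1]];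
             C addR [:: C mulR [:: cst (nc * nc); P 0]; cst (j0 td)]].
Lemma evalE nc r td n b : peval (evalR nc r td) [:: n; b] = evalS nc r td n b.
Proof. by rewrite /evalR; pev; rewrite BHE FHE; simplR. Qed.

Definition HbS nc l := iter l (fun h => (npair h nc).+1) 0.
Definition HbR nc := RPrim (cst 0) (C RSucc [:: C npairR [:: P 1; cst nc]]).
Lemma HbE nc l : peval (HbR nc) [:: l] = HbS nc l.
Proof. rewrite /HbR /HbS; elim: l => [|l IH]; pev; first by rewrite ?cstE. by rewrite IH; simplR. Qed.
Definition GS nc n := (npair n (HbS nc n)).+1.
Definition GR nc := C RSucc [:: C npairR [:: P 0; C (HbR nc) [:: P 0]]].
Lemma GE nc n : peval (GR nc) [:: n] = GS nc n.
Proof. by rewrite /GR; pev; rewrite HbE npairE. Qed.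

Definition progS nc r td n : nat := 0 < \sum_(b < 2 ^ GS nc n) evalS nc r td n b.
Definition progR nc r td := C sgR [:: C (sumR (C (evalR nc r td) [:: P 2; P 0])) [:: C pow2R [:: C (GR nc) [:: P 0]]; P 0]].
Lemma progE nc r td n : peval (progR nc r td) [:: n] = progS nc r td n.
Proof.
rewrite /progR; pev; rewrite GE pow2E (@sumE _ (fun b => evalS nc r td n b)) ?sgE // => i a.
by pev; rewrite evalE.
Qed.

Definition pb (P : Prop) : bool := if excluded_middle_informative P then true else false.
Lemma pbP P : reflect P (pb P).
Proof. rewrite /pb; case: excluded_middle_informative => h; by constructor. Qed.

Definition named nc (M : model nc) := forall d : mdom nc M, exists c, mcons nc M c = d.

Definition name nc (c0 : 'I_nc) (M : model nc) (d : mdom nc M) : 'I_nc :=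
  odflt c0 [pick c | mcons nc M c == d].
Definition nm nc c0 M d : nat := val (@name nc c0 M d).
Definition dec nc (c0 : 'I_nc) (M : model nc) (u : nat) : mdom nc M := mcons nc M (insubd c0 u).

Lemma name_ok nc c0 M d : named M -> mcons nc M (@name nc c0 M d) = d.
Proof.
move=> hn; rewrite /name; case: pickP => [c /eqP //|h].
by case: (hn d) => c hc; move: (h c); rewrite hc eqxx.
Qed.
Lemma dec_nm nc c0 M d : named M -> @dec nc c0 M (nm c0 d) = d.
Proof. by move=> hn; rewrite /dec /nm valKd name_ok. Qed.
Lemma nm_lt nc c0 M d : @nm nc c0 M d < nc.
Proof. exact: ltn_ord. Qed.
Lemma nm_inj nc c0 M d d' : named M -> @nm nc c0 M d = nm c0 d' -> d = d'.
Proof. by move=> hn h; rewrite -(dec_nm c0 d hn) h dec_nm. Qed.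
Lemma dec_cons nc c0 M (c : 'I_nc) : @dec nc c0 M c = mcons nc M c.
Proof. by rewrite /dec valKd. Qed.

Definition sit nc c0 M (j : nat) : var -> mdom nc M :=
  fun z => if z is vx then @dec nc c0 M (j %/ nc) else dec c0 M (j %% nc).
Definition sidx nc c0 M (s : var -> mdom nc M) := @nm nc c0 M (s vx) * nc + nm c0 (s vy).
Lemma sidx_lt nc c0 M s : @sidx nc c0 M s < nc * nc.
Proof.
rewrite /sidx; have h1 := nm_lt c0 (s vx); have h2 := nm_lt c0 (s vy).
apply: (@leq_trans ((nm c0 (s vx)).+1 * nc)); first by rewrite mulSn addnC ltn_add2r.
by rewrite leq_mul2r h1 orbT.
Qed.
Lemma sidx_div nc c0 M s : @sidx nc c0 M s %/ nc = nm c0 (s vx).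
Proof. by rewrite /sidx divnMDl ?(leq_ltn_trans (leq0n _) (nm_lt c0 (s vy))) // divn_small ?addn0 // nm_lt. Qed.
Lemma sidx_mod nc c0 M s : @sidx nc c0 M s %% nc = nm c0 (s vy).
Proof. by rewrite /sidx modnMDl modn_small // nm_lt. Qed.
Lemma sit_sidx nc c0 M s : named M -> sit c0 M (@sidx nc c0 M s) = s.
Proof.
move=> hn; apply: functional_extensionality => z.
by case: z; rewrite /sit ?sidx_div ?sidx_mod dec_nm.
Qed.

Definition MA nc ar r (c0 : 'I_nc) (M : model nc) (A : nat -> seq nat -> bool) : model nc :=
  Model nc (mdom nc M)
    (fun P l => if P == r then minterp nc M r l else (size l == ar P) && A P (map (@nm nc c0 M) l))
    (mcons nc M) (msits nc M) (msim nc M).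

Lemma nbhd_MA nc ar r c0 M A m (a b : mdom nc M) :
  nbhd nc r (@MA nc ar r c0 M A) m a b <-> nbhd nc r M m a b.
Proof.
have hR x y : relR nc r (MA ar r c0 M A) x y <-> relR nc r M x y by rewrite /relR /= eqxx.
elim: m b => [|m IH] b //=.
split=> [[h|[u [hu hr]]]|[h|[u [hu hr]]]].
- by left; apply/IH.
- by right; exists u; split; [apply/IH | move: hr; rewrite !hR].
- by left; apply/IH.
- by right; exists u; split; [apply/IH | move: hr; rewrite -!hR].
Qed.

Lemma MA_model nc ar r k c0 M A : is_model nc ar r M -> k_sight nc r k M ->
  is_model nc ar r (@MA nc ar r c0 M A) /\ k_sight nc r k (MA ar r c0 M A).
Proof.
case=> hsz hser hnam hne heq hk; split.
- split => //=.
  + move=> P s; case: eqP => [->|_]; first exact: hsz.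
    by case/andP => /eqP.
  + move=> a; case: (hser a) => b hb; exists b; by rewrite /relR /= eqxx.
- move=> z s s' hs hs' hsim z' hnb; apply: (hk z s s' hs hs' hsim z').
  exact: (proj1 (@nbhd_MA nc ar r c0 M A k (s z) (s z')) hnb).
Qed.

Definition good nc r c0 (M : model nc) (s : var -> mdom nc M) (td : TD) : Prop :=
  [/\ (forall c, c < nc -> nth 0 (cnl td) c = @nm nc c0 M (dec c0 M c)) /\
      (forall c, c < nc -> nth 0 (canl td) c = @nm nc c0 M (dec c0 M c)),
      forall u v, u < nc -> v < nc -> nth 0 (Rl td) (u * nc + v) = minterp nc M r [:: dec c0 M u; dec c0 M v],
      forall j, j < nc * nc -> nth 0 (Sgl td) j = pb (msits nc M (sit c0 M j)),
      (forall j j', j < nc * nc -> j' < nc * nc ->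
         nth 0 (Xl td) (j * (nc * nc) + j') = pb (msim nc M vx (sit c0 M j) (sit c0 M j'))) /\
      (forall j j', j < nc * nc -> j' < nc * nc ->
         nth 0 (Yl td) (j * (nc * nc) + j') = pb (msim nc M vy (sit c0 M j) (sit c0 M j'))) &
      (j0 td = sidx c0 s /\ all (fun x => x <= 1) (Rl td))].

Lemma divl_nth nc j : j < nc * nc -> nth 0 (divl nc) j = j %/ nc.
Proof. by move=> h; rewrite /divl (nth_map 0) ?size_iota // nth_iota. Qed.
Lemma modl_nth nc j : j < nc * nc -> nth 0 (modl nc) j = j %% nc.
Proof. by move=> h; rewrite /modl (nth_map 0) ?size_iota // nth_iota. Qed.
Lemma div_lt nc j : j < nc * nc -> j %/ nc < nc.
Proof. by move=> h; rewrite ltn_divLR // lt0n; apply/eqP => e; rewrite e in h. Qed.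
Lemma mod_lt nc j : j < nc * nc -> j %% nc < nc.
Proof. by move=> h; rewrite ltn_pmod // lt0n; apply/eqP => e; rewrite e in h. Qed.

Lemma tval_ok nc r c0 M s td (t : term nc) j : @good nc r c0 M s td -> j < nc * nc ->
  tvalS nc td j (enc_term nc t) = @nm nc c0 M (teval nc M (sit c0 M j) t).
Proof.
case=> [[hcn hcan] _ _ _ [hj _]] hjS; case: t => [c|z] /=.
- by rewrite /tvalS ufst_npair usnd_npair /= hcn // dec_cons.
- rewrite /tvalS ufst_npair usnd_npair /=.
  by case: z => /=; rewrite ?divl_nth ?modl_nth // hcan ?div_lt ?mod_lt.
Qed.

Lemma pb_iff (P Q : Prop) : (P <-> Q) -> pb P = pb Q.
Proof. by move=> h; apply/pbP/pbP => /h. Qed.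
Lemma pb_not (P : Prop) : pb (~ P) = ~~ pb P.
Proof. by apply/pbP/negP => [h /pbP|h hp] //; apply: h; apply/pbP. Qed.
Lemma pb_and (P Q : Prop) : pb (P /\ Q) = pb P && pb Q.
Proof. by apply/pbP/andP => [[/pbP ? /pbP ?]|[/pbP ? /pbP ?]]. Qed.
Lemma pb_bool (b : bool) : pb b = b.
Proof. by apply/pbP/idP. Qed.
Lemma pb_eq (T : eqType) (x y : T) : pb (x = y) = (x == y).
Proof. by apply/pbP/eqP. Qed.

Definition foldcode (l : seq nat) := foldl (fun acc v => (npair acc v).+1) 0 l.
Lemma size_enc_terms nc (ts : seq (term nc)) : size ts <= enc_terms nc ts.
Proof. elim: ts => //= t ts IH; rewrite ltnS; exact: leq_trans IH (npair_geR _ _). Qed.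
Lemma iter_fstep nc td j (f : term nc -> nat) (ts : seq (term nc)) acc fuel :
  size ts <= fuel -> (forall t, tvalS nc td j (enc_term nc t) = f t) ->
  iter fuel (fstepS nc td j) (npair (enc_terms nc ts) acc) =
  npair 0 (foldl (fun acc v => (npair acc v).+1) acc (map f ts)).
Proof.
elim: ts acc fuel => [|t ts IH] acc fuel /=.
  by move=> _ _; apply: iter_fix; rewrite /fstepS ufst_npair.
case: fuel => [|fuel] //; rewrite ltnS => hs hf.
rewrite iterSr {2}/fstepS ufst_npair /= usnd_npair ufst_npair usnd_npair.
by rewrite hf IH.
Qed.
Lemma foldS_ok nc td j (f : term nc -> nat) (ts : seq (term nc)) :
  (forall t, tvalS nc td j (enc_term nc t) = f t) ->
  foldS nc td j (enc_terms nc ts) = foldcode (map f ts).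
Proof. by move=> hf; rewrite /foldS (iter_fstep (f := f)) ?usnd_npair // size_enc_terms. Qed.

Definition Ab (b : nat) (P : nat) (l : seq nat) := bitn b (npair P (foldcode l)).

Lemma atom_ok nc ar r c0 M s td b P (ts : (ar P).-tuple (term nc)) j :
  @good nc r c0 M s td -> named M -> ar r = 2 -> j < nc * nc ->
  atomS nc r td b j (npair P (enc_terms nc (tval ts))) =
  minterp nc (MA ar r c0 M (Ab b)) P (map (teval nc (MA ar r c0 M (Ab b)) (sit c0 M j)) (tval ts)).
Proof.
move=> hg hn har hj; have hg' := hg; case: hg' => [_ hR _ _ _].
rewrite /atomS ufst_npair usnd_npair /=.
case: eqP => [eP|nP].
- subst P; case: ts => l hl; move: hl; rewrite har; case: l => [|t1 [|t2 [|t3 l]]] // _ /=.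
  rewrite !ufst_npair !usnd_npair /= !ufst_npair !(@tval_ok nc r c0 M s td _ j hg hj) // hR ?nm_lt //.
  by rewrite !dec_nm.
- rewrite size_map size_tuple eqxx /= /Ab (foldS_ok (f := fun t => nm c0 (teval nc M (sit c0 M j) t))).
    by rewrite -map_comp.
  by move=> t; rewrite (@tval_ok nc r c0 M s td _ j hg hj).
Qed.

Lemma bitn_step S N H (v : nat -> nat) p : H < 2 ^ (S * N) -> (forall j, j < S -> v j <= 1) ->
  bitn (H + (\sum_(j < S) v j * 2 ^ j) * 2 ^ (S * N)) p =
  if p < S * N then bitn H p else (p - S * N < S) && (v (p - S * N) != 0).
Proof.
move=> hH hv.
have -> : \sum_(j < S) v j * 2 ^ j = bsumv (fun j => v j != 0) S.
  apply: eq_bigr => j _; have := hv j (ltn_ord j); by case: (v j) => [|[|]].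
by rewrite bitn_add // bitn_bsumv.
Qed.
Lemma step_lt S N H (v : nat -> nat) : H < 2 ^ (S * N) -> (forall j, j < S -> v j <= 1) ->
  H + (\sum_(j < S) v j * 2 ^ j) * 2 ^ (S * N) < 2 ^ (S * N.+1).
Proof.
move=> hH hv.
have -> : \sum_(j < S) v j * 2 ^ j = bsumv (fun j => v j != 0) S.
  apply: eq_bigr => j _; have := hv j (ltn_ord j); by case: (v j) => [|[|]].
have h := bsumv_lt (fun j => v j != 0) S.
rewrite mulnS expnD mulnC; apply: (@leq_trans (2 ^ (S * N) * (bsumv (fun j => v j != 0) S).+1)).
  by rewrite mulnS ltn_add2r.
by rewrite [2 ^ S * _]mulnC leq_mul2l h orbT.
Qed.
Lemma pos_lt S m j N : j < S -> (S * m + j < S * N) = (m < N).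
Proof.
move=> hj; case: (ltnP m N) => h.
- apply: (@leq_trans (S * m.+1)); first by rewrite mulnS addnC ltn_add2r.
  by rewrite leq_mul2l h orbT.
- apply/negbTE; rewrite -leqNgt; apply: leq_trans (leq_addr _ _); by rewrite leq_mul2l h orbT.
Qed.

Lemma nth_le1 l i : all (fun x => x <= 1) l -> nth 0 l i <= 1.
Proof.
move=> /allP h; case: (ltnP i (size l)) => hi; first by apply: h; rewrite mem_nth.
by rewrite nth_default.
Qed.
Lemma bBS_le1 nc r c0 M s td b H m j : @good nc r c0 M s td -> bBS nc r td b H m j <= 1.
Proof.
case=> _ _ _ _ [_ hRl]; rewrite /bBS /atomS.
by repeat case: ifP => ?; rewrite ?leq_b1 ?nth_le1.
Qed.

Lemma neq0b (c : bool) : ((c : nat) != 0) = c.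
Proof. by case: c. Qed.

Definition okB nc ar r c0 M b N H :=
  forall (a : bform nc ar) j, enc_bform nc ar a < N -> j < nc * nc ->
    bitn H (nc * nc * enc_bform nc ar a + j) = pb (bsat nc ar (MA ar r c0 M (Ab b)) (sit c0 M j) a).

Lemma BHS_ok nc ar r c0 M s td b N : @good nc r c0 M s td -> named M -> ar r = 2 ->
  BHS nc r td b N < 2 ^ (nc * nc * N) /\ @okB nc ar r c0 M b N (BHS nc r td b N).
Proof.
move=> hg hn har; elim: N => [|N [IHlt IHok]].
  by split; [rewrite /= muln0 | move=> a j].
have hv : forall j, j < nc * nc -> bBS nc r td b (BHS nc r td b N) N j <= 1.
  by move=> j _; exact: bBS_le1 hg.
split; first exact: step_lt.
move=> a j ha hj; rewrite /= /entryBS bitn_step // pos_lt //.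
case: (ltnP (enc_bform nc ar a) N) => hlt; first exact: IHok.
have eN : enc_bform nc ar a = N by apply/eqP; rewrite eqn_leq hlt -ltnS ha.
rewrite -eN mulnC addKn hj /=.
move: IHok; rewrite -eN => IHok.
case: a IHok eN {ha hlt} => [P ts|t1 t2|a1|a1 a2] IHok eN /=; rewrite /bBS ufst_npair usnd_npair /=.
- by rewrite (@atom_ok nc ar r c0 M s td b P ts j hg hn har hj) pb_bool /=; case: (if _ then _ else _).
- rewrite ?ufst_npair ?usnd_npair !(@tval_ok nc r c0 M s td _ j hg hj) pb_eq.
  rewrite neq0b; apply/eqP/eqP => [/(nm_inj hn) //|e]; exact: (congr1 (@nm nc c0 M) e).
- rewrite IHok // ?npair_gtR // pb_not; by case: (pb _).
- rewrite !ufst_npair !usnd_npair !IHok //; first by rewrite pb_and; case: (pb _ && pb _).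
  + apply: leq_trans (npair_gtR _ (isT : 0 < 3)); exact: npair_geR.
  + apply: leq_trans (npair_gtR _ (isT : 0 < 3)); exact: npair_geL.
Qed.

Lemma K_sem nc c0 (M : model nc) z j (Q : (var -> mdom nc M) -> Prop) (F : nat -> bool) :
  named M -> (forall j', j' < nc * nc -> F j' = pb (Q (sit c0 M j'))) ->
  (\sum_(j' < nc * nc) (pb (msits nc M (sit c0 M j')) * pb (msim nc M z (sit c0 M j) (sit c0 M j')) * ~~ F j') == 0)
  = pb (forall s', msits nc M s' -> msim nc M z (sit c0 M j) s' -> Q s').
Proof.
move=> hn hF; rewrite sum_nat_eq0; apply/forallP/pbP.
- move=> h s' hs hz; have hlt := sidx_lt c0 s'.
  move: (h (Ordinal hlt)) => /=; rewrite hF // sit_sidx // => /eqP.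
  have /pbP -> : msits nc M s' by [].
  have /pbP -> : msim nc M z (sit c0 M j) s' by [].
  by case: pbP.
- move=> h i; rewrite hF //.
  case: pbP => hs; case: pbP => hz //=; case: pbP => // hq.
  by case: hq; apply: h.
Qed.

Lemma ZS_ok nc r c0 M s td z j j' : @good nc r c0 M s td -> j < nc * nc -> j' < nc * nc ->
  ZS nc td (enc_var z) j j' = pb (msim nc M z (sit c0 M j) (sit c0 M j')).
Proof. case=> _ _ _ [hX hY] _ hj hj'; by case: z; rewrite /ZS /= ?hX ?hY. Qed.

Lemma KtS_ok nc r c0 M s td z (t : term nc) j : @good nc r c0 M s td -> named M -> j < nc * nc ->
  KtS nc td j (enc_term nc t) (enc_var z) =
  pb (forall s', msits nc M s' -> msim nc M z (sit c0 M j) s' -> teval nc M s' t = teval nc M (sit c0 M j) t).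
Proof.
move=> hg hn hj; have hg' := hg; case: hg' => _ _ hSg _ _.
rewrite /KtS -(@K_sem nc c0 M z j _ (fun j' => tvalS nc td j' (enc_term nc t) == tvalS nc td j (enc_term nc t))) //.
  congr (_ == 0); apply: eq_bigr => i _; by rewrite hSg // (@ZS_ok nc r c0 M s td z j i hg hj (ltn_ord i)).
move=> j' hj'; rewrite (@tval_ok nc r c0 M s td t j' hg hj') (@tval_ok nc r c0 M s td t j hg hj) pb_eq.
by apply/eqP/eqP => [/(nm_inj hn)|->].
Qed.

Lemma KaS_ok nc ar r c0 M s td b z (a : bform nc ar) j BHf n : @good nc r c0 M s td -> named M -> j < nc * nc ->
  enc_bform nc ar a < n -> @okB nc ar r c0 M b n BHf ->
  KaS nc td BHf j (enc_bform nc ar a) (enc_var z) =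
  pb (forall s', msits nc M s' -> msim nc M z (sit c0 M j) s' -> bsat nc ar (MA ar r c0 M (Ab b)) s' a).
Proof.
move=> hg hn hj ha hB; have hg' := hg; case: hg' => _ _ hSg _ _.
rewrite /KaS -(@K_sem nc c0 M z j _ (fun j' => bitn BHf (nc * nc * enc_bform nc ar a + j'))) //.
  congr (_ == 0); apply: eq_bigr => i _; by rewrite hSg // (@ZS_ok nc r c0 M s td z j i hg hj (ltn_ord i)).
by move=> j' hj'; rewrite hB.
Qed.

Definition okF nc ar r c0 M b N H :=
  forall (f : form nc ar) j, enc_form nc ar f < N -> j < nc * nc ->
    bitn H (nc * nc * enc_form nc ar f + j) = pb (fsat nc ar (MA ar r c0 M (Ab b)) (sit c0 M j) f).

Lemma bFS_le1 nc td BHf H m j : bFS nc td BHf H m j <= 1.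
Proof. by rewrite /bFS; repeat case: ifP => ?; rewrite ?leq_b1. Qed.

Lemma FHS_ok nc ar r c0 M s td b n BHf N : @good nc r c0 M s td -> named M ->
  @okB nc ar r c0 M b n BHf -> N <= n ->
  FHS nc td BHf N < 2 ^ (nc * nc * N) /\ @okF nc ar r c0 M b N (FHS nc td BHf N).
Proof.
move=> hg hn hB; elim: N => [|N IH] hN.
  by split; [rewrite /= muln0 | move=> a j].
have [IHlt IHok] := IH (ltnW hN).
have hv : forall j, j < nc * nc -> bFS nc td BHf (FHS nc td BHf N) N j <= 1.
  by move=> j _; exact: bFS_le1.
split; first exact: step_lt.
move=> f j hf hj; rewrite /= /entryFS bitn_step // pos_lt //.
case: (ltnP (enc_form nc ar f) N) => hlt; first exact: IHok.
have eN : enc_form nc ar f = N by apply/eqP; rewrite eqn_leq hlt -ltnS hf.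
rewrite -eN mulnC addKn hj /=.
move: IHok hN; rewrite -eN => IHok hN.
case: f IHok eN hN {hf hlt} => [a|z t|f1|f1 f2|z a] IHok eN hN /=; rewrite /bFS ufst_npair usnd_npair /=.
- by rewrite neq0b hB //; apply: leq_ltn_trans hN; exact: npair_geR.
- by rewrite ufst_npair usnd_npair neq0b (@KtS_ok nc r c0 M s td z t j hg hn hj).
- rewrite IHok // ?npair_gtR // pb_not; by case: (pb _).
- rewrite !ufst_npair !usnd_npair !IHok //; first by rewrite pb_and; case: (pb _ && pb _).
  + apply: leq_trans (npair_gtR _ (isT : 0 < 3)); exact: npair_geR.
  + apply: leq_trans (npair_gtR _ (isT : 0 < 3)); exact: npair_geL.
- rewrite ufst_npair usnd_npair neq0b (@KaS_ok nc ar r c0 M s td b z a j BHf n hg hn hj _ hB) //.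
  apply: leq_ltn_trans hN; exact: leq_trans (npair_geR _ _) (npair_geR _ _).
Qed.

Lemma evalS_ok nc ar r c0 M s td b (f : form nc ar) : @good nc r c0 M s td -> named M -> ar r = 2 ->
  evalS nc r td (enc_form nc ar f) b = pb (fsat nc ar (MA ar r c0 M (Ab b)) s f).
Proof.
move=> hg hn har; have hg' := hg; case: hg' => _ _ _ _ [hj0 _].
have [_ hB] := @BHS_ok nc ar r c0 M s td b (enc_form nc ar f).+1 hg hn har.
have [_ hF] := @FHS_ok nc ar r c0 M s td b _ _ (enc_form nc ar f).+1 hg hn hB (leqnn _).
by rewrite /evalS hj0 hF // ?sidx_lt // sit_sidx.
Qed.

Lemma foldcode_rcons l v : foldcode (rcons l v) = (npair (foldcode l) v).+1.
Proof. by rewrite /foldcode foldl_rcons. Qed.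
Lemma foldcode_inj l l' : foldcode l = foldcode l' -> l = l'.
Proof.
elim/last_ind: l l' => [|l v IH] l'; case/lastP: l' => [|l' v'] //.
- by rewrite foldcode_rcons.
- by rewrite foldcode_rcons.
- rewrite !foldcode_rcons => [[/npair_inj [/IH -> ->]]] //.
Qed.
Lemma HbS_S nc l : HbS nc l.+1 = (npair (HbS nc l) nc).+1.
Proof. by rewrite /HbS iterS. Qed.
Lemma HbS_mono nc : {homo HbS nc : a b / a <= b}.
Proof.
apply: homo_leq => [a|b a c|l]; [exact: leqnn|exact: leq_trans|].
by rewrite HbS_S; apply: leq_trans (npair_geL _ nc) (leqnSn _).
Qed.
Lemma foldcode_le nc l : all (fun v => v < nc) l -> foldcode l <= HbS nc (size l).
Proof.
elim/last_ind: l => [|l v IH] //; rewrite all_rcons size_rcons => /andP[hv hl].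
rewrite foldcode_rcons HbS_S ltnS; apply: leq_trans (npair_monoL _ (IH hl)) _.
by apply: npair_monoR; apply: ltnW.
Qed.
Lemma fact_lt nc P l n : P <= n -> size l <= n -> all (fun v => v < nc) l ->
  npair P (foldcode l) < GS nc n.
Proof.
move=> hP hs ha; rewrite /GS ltnS; apply: leq_trans (npair_monoL _ hP) _.
apply: npair_monoR; apply: leq_trans (foldcode_le ha) _; exact: HbS_mono.
Qed.

Definition agree nc n (A A' : nat -> seq nat -> bool) :=
  forall P l, P <= n -> size l <= n -> all (fun v => v < nc) l -> A P l = A' P l.

Lemma bsat_agree nc ar r c0 M A A' n (a : bform nc ar) s : agree nc n A A' -> enc_bform nc ar a <= n ->
  (bsat nc ar (MA ar r c0 M A) s a <-> bsat nc ar (MA ar r c0 M A') s a).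
Proof.
move=> hA; elim: a => [P ts|t1 t2|a1 IH|a1 IH1 a2 IH2] /= ha.
- case: eqP => // _; rewrite hA //.
  + by apply: leq_trans ha; apply: leq_trans (npair_geL P _) (npair_geR 0 _).
  + rewrite !size_map; apply: leq_trans (size_enc_terms _) _; apply: leq_trans ha.
    exact: leq_trans (npair_geR P _) (npair_geR 0 _).
  + by apply/allP => v /mapP [d _ ->]; exact: nm_lt.
- by [].
- have := IH (leq_trans (npair_geR _ _) ha); tauto.
- have h1 := IH1 (leq_trans (leq_trans (npair_geL _ _) (npair_geR 3 _)) ha).
  have h2 := IH2 (leq_trans (leq_trans (npair_geR _ _) (npair_geR 3 _)) ha).
  tauto.
Qed.

Lemma fsat_agree nc ar r c0 M A A' n (f : form nc ar) s : agree nc n A A' -> enc_form nc ar f <= n ->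
  (fsat nc ar (MA ar r c0 M A) s f <-> fsat nc ar (MA ar r c0 M A') s f).
Proof.
move=> hA; elim: f s => [a|z t|f1 IH|f1 IH1 f2 IH2|z a] s /= hf.
- apply: bsat_agree hA _; exact: leq_trans (npair_geR _ _) hf.
- by [].
- have := IH s (leq_trans (npair_geR _ _) hf); tauto.
- have h1 := IH1 s (leq_trans (leq_trans (npair_geL _ _) (npair_geR 3 _)) hf).
  have h2 := IH2 s (leq_trans (leq_trans (npair_geR _ _) (npair_geR 3 _)) hf).
  tauto.
- have ha : enc_bform nc ar a <= n.
    by apply: leq_trans hf; exact: leq_trans (npair_geR _ _) (npair_geR 4 _).
  split=> h s' hs hz; [apply/(@bsat_agree nc ar r c0 M A A' n a s' hA ha) | apply/(@bsat_agree nc ar r c0 M A A' n a s' hA ha)]; exact: h.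
Qed.

Definition A0 nc c0 (M : model nc) P l := minterp nc M P (map (@dec nc c0 M) l).

Lemma bsat_A0 nc ar r c0 M (a : bform nc ar) s : named M ->
  (bsat nc ar (MA ar r c0 M (A0 c0 M)) s a <-> bsat nc ar M s a).
Proof.
move=> hn; elim: a => [P ts|t1 t2|a1 IH|a1 IH1 a2 IH2] /=.
- rewrite /A0 -map_comp (eq_map (g := id)); last by move=> d /=; rewrite dec_nm.
  rewrite map_id size_map size_tuple eqxx /=.
  by case: eqP => [e|_] //; subst.
- by [].
- tauto.
- tauto.
Qed.

Lemma fsat_A0 nc ar r c0 M (f : form nc ar) s : named M ->
  (fsat nc ar (MA ar r c0 M (A0 c0 M)) s f <-> fsat nc ar M s f).
Proof.
move=> hn; elim: f s => [a|z t|f1 IH|f1 IH1 f2 IH2|z a] s /=.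
- exact: bsat_A0.
- by [].
- have := IH s; tauto.
- have := IH1 s; have := IH2 s; tauto.
- split=> h s' hs hz; [apply/(@bsat_A0 nc ar r c0 M a s' hn) | apply/(@bsat_A0 nc ar r c0 M a s' hn)]; exact: h.
Qed.

Lemma prog_complete nc ar r c0 M s td (f : form nc ar) :
  @good nc r c0 M s td -> is_model nc ar r M -> ar r = 2 -> fsat nc ar M s f ->
  progS nc r td (enc_form nc ar f) != 0.
Proof.
move=> hg hM har hf; have hn : named M by case: hM.
set n := enc_form nc ar f.
pose beta g := pb (exists P l, g = npair P (foldcode l) /\ A0 c0 M P l).
have [b hb hbits] := bitn_bool_ex beta (GS nc n).
have hag : agree nc n (Ab b) (A0 c0 M).
  move=> P l hP hs hl; rewrite /Ab hbits ?fact_lt //.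
  apply/pbP/idP => [[P' [l' [e h]]]|h]; last by exists P, l.
  by case: (npair_inj e) => -> /foldcode_inj ->.
have hf' : fsat nc ar (MA ar r c0 M (Ab b)) s f.
  apply/(@fsat_agree nc ar r c0 M (Ab b) (A0 c0 M) n f s hag (leqnn n)).
  exact/(@fsat_A0 nc ar r c0 M f s hn).
have he : evalS nc r td n b = true by rewrite (@evalS_ok nc ar r c0 M s td b f hg hn har); apply/pbP.
rewrite /progS lt0n -lt0n; rewrite (bigD1 (Ordinal hb)) //= he.
by [].
Qed.

Lemma prog_sound nc ar r k c0 M s td (f : form nc ar) :
  @good nc r c0 M s td -> is_model nc ar r M -> k_sight nc r k M -> msits nc M s -> ar r = 2 ->
  progS nc r td (enc_form nc ar f) != 0 -> satisfiable nc ar r k f.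
Proof.
move=> hg hM hk hs har; have hn : named M by case: hM.
rewrite /progS neq0b lt0n sum_nat_eq0 => /forallPn [b] /=.
rewrite eqb0 negbK (@evalS_ok nc ar r c0 M s td b f hg hn har) => /pbP hf.
have [hM' hk'] := @MA_model nc ar r k c0 M (Ab b) hM hk.
by exists (MA ar r c0 M (Ab b)), s.
Qed.

Lemma sf_tabA e k l : sf e (tabA k l).
Proof. elim: l e k => [|a l IH] e k //=. rewrite !IH !sf_cst /=. by case: e. Qed.
Lemma sf_tab e l : sf e (tab l).
Proof. exact: sf_tabA. Qed.
Opaque tab cst.
Lemma sf_sumR' body : sf false body -> sf false (sumR body).
Proof. by move=> h; rewrite sf_sumR. Qed.
Lemma sf_iterR step : sf false step -> sf false (iterR step).
Proof. by move=> h; rewrite /= h. Qed.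
Opaque sumR iterR.
Lemma sf_addR : sf false addR. Proof. by []. Qed.
Lemma sf_mulR : sf false mulR. Proof. by []. Qed.
Lemma sf_predR : sf false predR. Proof. by []. Qed.
Lemma sf_subR : sf false subR. Proof. by []. Qed.
Lemma sf_iszR : sf false iszR. Proof. by []. Qed.
Opaque addR mulR predR subR iszR.
Lemma sf_sgR : sf false sgR. Proof. by rewrite /sgR /= sf_cst. Qed.
Lemma sf_leR : sf false leR. Proof. by []. Qed.
Opaque sgR leR.
Lemma sf_eqR : sf false eqR. Proof. by []. Qed.
Opaque eqR.
Lemma sf_iteR : sf false iteR. Proof. by []. Qed.
Lemma sf_pow2R : sf false pow2R. Proof. by rewrite /pow2R /= sf_cst. Qed.
Lemma sf_triR : sf false triR. Proof. by rewrite /triR /= sf_sumR'. Qed.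
Opaque iteR pow2R triR.
Lemma sf_npairR : sf false npairR. Proof. by []. Qed.
Lemma sf_sR : sf false sR. Proof. by rewrite /sR /= sf_sumR'. Qed.
Opaque npairR sR.
Lemma sf_sndR : sf false sndR. Proof. by []. Qed.
Opaque sndR.
Lemma sf_fstR : sf false fstR. Proof. by []. Qed.
Lemma sf_halfR : sf false halfR. Proof. by []. Qed.
Opaque fstR halfR.
Lemma sf_oddR : sf false oddR. Proof. by []. Qed.
Opaque oddR.
Lemma sf_bitR : sf false bitR. Proof. by rewrite /bitR /= sf_iterR. Qed.
Opaque bitR.

Ltac sfs := rewrite /= /nilp /= ?sf_tab ?sf_cst ?sf_addR ?sf_mulR ?sf_predR ?sf_subR ?sf_iszR ?sf_sgR ?sf_leR ?sf_eqR ?sf_iteR ?sf_pow2R ?sf_triR ?sf_npairR ?sf_sR ?sf_sndR ?sf_fstR ?sf_halfR ?sf_oddR ?sf_bitR //=.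

Lemma sf_tvalR nc td : sf false (tvalR nc td).
Proof. rewrite /tvalR; do 4 (sfs; rewrite ?sf_sumR'  //=). Qed.
Opaque tvalR.
Lemma sf_fstepR nc td : sf false (fstepR nc td).
Proof. rewrite /fstepR; do 4 (sfs; rewrite ?sf_sumR' ?sf_tvalR //=). Qed.
Opaque fstepR.
Lemma sf_foldR nc td : sf false (foldR nc td).
Proof. rewrite /foldR; do 4 (sfs; rewrite ?sf_sumR' ?sf_tvalR ?sf_fstepR //=). Qed.
Opaque foldR.
Lemma sf_atomR nc r td : sf false (atomR nc r td).
Proof. rewrite /atomR; do 4 (sfs; rewrite ?sf_sumR' ?sf_tvalR ?sf_fstepR ?sf_foldR //=). Qed.
Opaque atomR.
Lemma sf_bBR nc r td : sf false (bBR nc r td).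
Proof. rewrite /bBR; do 4 (sfs; rewrite ?sf_sumR' ?sf_tvalR ?sf_fstepR ?sf_foldR ?sf_atomR //=). Qed.
Opaque bBR.
Lemma sf_entryBR nc r td : sf false (entryBR nc r td).
Proof. rewrite /entryBR; do 4 (sfs; rewrite ?sf_sumR' ?sf_tvalR ?sf_fstepR ?sf_foldR ?sf_atomR ?sf_bBR //=). Qed.
Opaque entryBR.
Lemma sf_BHR nc r td : sf false (BHR nc r td).
Proof. rewrite /BHR; do 4 (sfs; rewrite ?sf_sumR' ?sf_tvalR ?sf_fstepR ?sf_foldR ?sf_atomR ?sf_bBR ?sf_entryBR //=). Qed.
Opaque BHR.
Lemma sf_ZR nc td : sf false (ZR nc td).
Proof. rewrite /ZR; do 4 (sfs; rewrite ?sf_sumR' ?sf_tvalR ?sf_fstepR ?sf_foldR ?sf_atomR ?sf_bBR ?sf_entryBR ?sf_BHR //=). Qed.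
Opaque ZR.
Lemma sf_KtR nc td : sf false (KtR nc td).
Proof. rewrite /KtR; do 4 (sfs; rewrite ?sf_sumR' ?sf_tvalR ?sf_fstepR ?sf_foldR ?sf_atomR ?sf_bBR ?sf_entryBR ?sf_BHR ?sf_ZR //=). Qed.
Opaque KtR.
Lemma sf_KaR nc td : sf false (KaR nc td).
Proof. rewrite /KaR; do 4 (sfs; rewrite ?sf_sumR' ?sf_tvalR ?sf_fstepR ?sf_foldR ?sf_atomR ?sf_bBR ?sf_entryBR ?sf_BHR ?sf_ZR ?sf_KtR //=). Qed.
Opaque KaR.
Lemma sf_bFR nc td : sf false (bFR nc td).
Proof. rewrite /bFR; do 4 (sfs; rewrite ?sf_sumR' ?sf_tvalR ?sf_fstepR ?sf_foldR ?sf_atomR ?sf_bBR ?sf_entryBR ?sf_BHR ?sf_ZR ?sf_KtR ?sf_KaR //=). Qed.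
Opaque bFR.
Lemma sf_entryFR nc td : sf false (entryFR nc td).
Proof. rewrite /entryFR; do 4 (sfs; rewrite ?sf_sumR' ?sf_tvalR ?sf_fstepR ?sf_foldR ?sf_atomR ?sf_bBR ?sf_entryBR ?sf_BHR ?sf_ZR ?sf_KtR ?sf_KaR ?sf_bFR //=). Qed.
Opaque entryFR.
Lemma sf_FHR nc td : sf false (FHR nc td).
Proof. rewrite /FHR; do 4 (sfs; rewrite ?sf_sumR' ?sf_tvalR ?sf_fstepR ?sf_foldR ?sf_atomR ?sf_bBR ?sf_entryBR ?sf_BHR ?sf_ZR ?sf_KtR ?sf_KaR ?sf_bFR ?sf_entryFR //=). Qed.
Opaque FHR.
Lemma sf_evalR nc r td : sf false (evalR nc r td).
Proof. rewrite /evalR; do 4 (sfs; rewrite ?sf_sumR' ?sf_tvalR ?sf_fstepR ?sf_foldR ?sf_atomR ?sf_bBR ?sf_entryBR ?sf_BHR ?sf_ZR ?sf_KtR ?sf_KaR ?sf_bFR ?sf_entryFR ?sf_FHR //=). Qed.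
Opaque evalR.
Lemma sf_HbR nc : sf false (HbR nc).
Proof. rewrite /HbR; do 4 (sfs; rewrite ?sf_sumR' ?sf_tvalR ?sf_fstepR ?sf_foldR ?sf_atomR ?sf_bBR ?sf_entryBR ?sf_BHR ?sf_ZR ?sf_KtR ?sf_KaR ?sf_bFR ?sf_entryFR ?sf_FHR ?sf_evalR //=). Qed.
Opaque HbR.
Lemma sf_GR nc : sf false (GR nc).
Proof. rewrite /GR; do 4 (sfs; rewrite ?sf_sumR' ?sf_tvalR ?sf_fstepR ?sf_foldR ?sf_atomR ?sf_bBR ?sf_entryBR ?sf_BHR ?sf_ZR ?sf_KtR ?sf_KaR ?sf_bFR ?sf_entryFR ?sf_FHR ?sf_evalR ?sf_HbR //=). Qed.
Opaque GR.
Lemma sf_progR nc r td : sf false (progR nc r td).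
Proof. rewrite /progR; do 4 (sfs; rewrite ?sf_sumR' ?sf_tvalR ?sf_fstepR ?sf_foldR ?sf_atomR ?sf_bBR ?sf_entryBR ?sf_BHR ?sf_ZR ?sf_KtR ?sf_KaR ?sf_bFR ?sf_entryFR ?sf_FHR ?sf_evalR ?sf_HbR ?sf_GR //=). Qed.
Opaque progR.

Definition TT nc : finType :=
  ((((((nc.-tuple 'I_nc) * ((nc * nc).-tuple bool)) * ((nc * nc).-tuple bool))
    * (((nc * nc) * (nc * nc)).-tuple bool)) * (((nc * nc) * (nc * nc)).-tuple bool)) * ('I_nc * 'I_nc))%type.

Definition toTD nc (t : TT nc) : TD :=
  let: (((((cn, R), Sg), X), Y), (a, b)) := t in
  mkTD (map val cn) (map val cn) (map nat_of_bool R) (map nat_of_bool Sg)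
       (map nat_of_bool X) (map nat_of_bool Y) (val a * nc + val b).

Definition ttOf nc r (c0 : 'I_nc) (M : model nc) (s : var -> mdom nc M) : TT nc :=
  (([tuple name c0 (dec c0 M i) | i < nc],
    [tuple minterp nc M r [:: dec c0 M (i %/ nc); dec c0 M (i %% nc)] | i < nc * nc],
    [tuple pb (msits nc M (sit c0 M i)) | i < nc * nc],
    [tuple pb (msim nc M vx (sit c0 M (i %/ (nc * nc))) (sit c0 M (i %% (nc * nc)))) | i < (nc * nc) * (nc * nc)],
    [tuple pb (msim nc M vy (sit c0 M (i %/ (nc * nc))) (sit c0 M (i %% (nc * nc)))) | i < (nc * nc) * (nc * nc)]),
   (name c0 (s vx), name c0 (s vy))).

Lemma nth_mkt (T : Type) (f : T -> nat) n (F : 'I_n -> T) i (hi : i < n) :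
  nth 0 (map f [tuple F j | j < n]) i = f (F (Ordinal hi)).
Proof.
rewrite (nth_map (F (Ordinal hi))) ?size_tuple //.
by rewrite -[nth _ _ i]/(nth _ _ (Ordinal hi)) -tnth_nth tnth_mktuple.
Qed.
Lemma divmod_pair m u v : v < m -> (u * m + v) %/ m = u /\ (u * m + v) %% m = v.
Proof.
move=> hv; have hm : 0 < m by apply: leq_ltn_trans hv.
by rewrite divnMDl // divn_small // addn0 modnMDl modn_small.
Qed.
Lemma pair_lt m u v : u < m -> v < m -> u * m + v < m * m.
Proof.
move=> hu hv; apply: (@leq_trans (u.+1 * m)); first by rewrite mulSn addnC ltn_add2r.
by rewrite leq_mul2r hu orbT.
Qed.

Lemma good_ttOf nc r c0 M s : named M -> @good nc r c0 M s (toTD (@ttOf nc r c0 M s)).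
Proof.
move=> hn; split => /=.
- by split=> c hc; rewrite (nth_mkt _ _ hc).
- move=> u v hu hv; rewrite (nth_mkt _ _ (pair_lt hu hv)) /=.
  by case: (divmod_pair u hv) => -> ->.
- by move=> j hj; rewrite (nth_mkt _ _ hj).
- split=> j j' hj hj'; rewrite (nth_mkt _ _ (pair_lt hj hj')) /=;
  by case: (divmod_pair j hj') => -> ->; case: pbP.
- split; first by [].
  by apply/allP => x /mapP [y _ ->]; exact: leq_b1.
Qed.

Definition realized nc ar r k (c0 : 'I_nc) (t : TT nc) : Prop :=
  exists (M : model nc) (s : var -> mdom nc M),
    [/\ is_model nc ar r M, k_sight nc r k M, msits nc M s & @ttOf nc r c0 M s = t].
Definition progT nc ar r k c0 (t : TT nc) : rec :=
  if pb (@realized nc ar r k c0 t) then progR nc r (toTD t) else RZero.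
Definition decider nc ar r k c0 : rec :=
  C sgR [:: orL [seq @progT nc ar r k c0 t | t <- enum (TT nc)]].

Lemma sf_orL ps : all (sf false) ps -> sf false (orL ps).
Proof. elim: ps => [|p ps IH] //= /andP[hp hps]; by rewrite hp IH. Qed.

Lemma sf_alg nc ar r k c0 : sf false (@decider nc ar r k c0).
Proof.
rewrite /decider /= !andbT; apply: sf_orL; rewrite all_map; apply/allP => t _ /=.
rewrite /progT; case: (pb _) => //; exact: (@sf_progR nc r (toTD t)).
Qed.

Lemma alg_val nc ar r k c0 (f : form nc ar) : ar r = 2 ->
  peval (@decider nc ar r k c0) [:: enc_form nc ar f] = pb (satisfiable nc ar r k f).
Proof.
move=> har; rewrite /decider peval_comp /= sgE orLE sumnE !big_map.
congr (nat_of_bool _); apply/idP/pbP.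
- rewrite lt0n sum_nat_seq_eq0 => /allPn [t _ /=].
  rewrite /progT; case: pbP => [[M [s [hM hk hs ht]]]|_]; last by rewrite peval_zero.
  rewrite progE; subst t; have hn : named M by case: hM.
  exact: (@prog_sound nc ar r k c0 M s _ f (good_ttOf r c0 s hn) hM hk hs har).
- case=> M [s [hM hk hs hf]].
  have hn : named M by case: hM.
  set t := @ttOf nc r c0 M s.
  rewrite lt0n sum_nat_seq_eq0; apply/allPn; exists t; first by rewrite -enumT mem_enum.
  rewrite /= /progT; case: pbP => [_|[]]; last by exists M, s.
  rewrite progE; exact: (@prog_complete nc ar r c0 M s _ f (good_ttOf r c0 s hn) hM har hf).
Qed.

Theorem corollary1 (k nc : nat) (ar : nat -> nat) (r : nat) :
  0 < nc -> ar r = 2 ->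
  exists alg : rec, forall phi : form nc ar,
    (satisfiable nc ar r k phi -> reval alg [:: enc_form nc ar phi] 1) /\
    (~ satisfiable nc ar r k phi -> reval alg [:: enc_form nc ar phi] 0).
Proof.
move=> hnc har; pose c0 : 'I_nc := Ordinal hnc.
exists (@decider nc ar r k c0) => phi.
have H := @sf_sound (@decider nc ar r k c0) false (sf_alg ar r k c0) [:: enc_form nc ar phi] (fun _ => isT).
rewrite alg_val // in H.
by split => hs; move: H; case: pbP.
Qed.
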